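(* Let $f^+,f^-:[0,1]\to[0,1]$ satisfy $f^+(0)=f^-(0)=0$, and let $\alpha>0$. Suppose that $ALG(uvw)\le\alpha\,LP(uvw)$ for every triangle of every sign pattern in $\{+,-\}^3$ (i.e. $(+,+,+)$, $(+,+,-)$, $(+,-,-)$, $(-,-,-)$) and every choice of edge lengths in $[0,1]$ satisfying the triangle inequalities. Then $\alpha>2.025$.
   Context: A triangle $uvw$ has pairs $uv,vw,uw$, each a positive ($+$) or negative ($-$) edge with length $x_e\in[0,1]$; triangle inequalities: each length is at most the sum of the other two. Let $p_e=f^+(x_e)$ for positive and $p_e=f^-(x_e)$ for negative edges. For a pair $(u,v)$ with third vertex $w$: $e.cost_w(u,v)=p_{uw}(1-p_{vw})+(1-p_{uw})p_{vw}$ if $(u,v)$ is positive, $(1-p_{uw})(1-p_{vw})$ if negative; $e.lp_w(u,v)=(1-p_{uw}p_{vw})x_{uv}$ if positive, $(1-p_{uw}p_{vw})(1-x_{uv})$ if negative. $ALG(uvw)=e.cost_w(u,v)+e.cost_v(w,u)+e.cost_u(v,w)$, $LP(uvw)=e.lp_w(u,v)+e.lp_v(w,u)+e.lp_u(v,w)$. (These are the per-triangle quantities of the pivot rounding algorithm for correlation clustering on complete graphs, which cuts a positive edge to the pivot with probability $f^+$ of its LP length and a negative one with probability $f^-$ of its LP length.) *)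

(* Defs.v *)
From Stdlib Require Import Reals.
Open Scope R_scope.

(* Edge sign: true = positive (+), false = negative (-). *)

(* Rounding probability of an edge of sign s and LP length x. *)
Definition pe (fp fm : R -> R) (s : bool) (x : R) : R :=
  if s then fp x else fm x.

(* e.cost_w(u,v), for the pair (u,v) of sign s, with p1 = p_{uw}, p2 = p_{vw}. *)
Definition ecost (s : bool) (p1 p2 : R) : R :=
  if s then p1 * (1 - p2) + (1 - p1) * p2 else (1 - p1) * (1 - p2).

(* e.lp_w(u,v), for the pair (u,v) of sign s and length x, with p1 = p_{uw}, p2 = p_{vw}. *)
Definition elp (s : bool) (p1 p2 x : R) : R :=
  if s then (1 - p1 * p2) * x else (1 - p1 * p2) * (1 - x).

Definition ALG (fp fm : R -> R) (s_uv s_vw s_uw : bool) (x_uv x_vw x_uw : R) : R :=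
  let p_uv := pe fp fm s_uv x_uv in
  let p_vw := pe fp fm s_vw x_vw in
  let p_uw := pe fp fm s_uw x_uw in
  (* e.cost_w(u,v) + e.cost_v(w,u) + e.cost_u(v,w) *)
  ecost s_uv p_uw p_vw + ecost s_uw p_vw p_uv + ecost s_vw p_uv p_uw.

Definition LP (fp fm : R -> R) (s_uv s_vw s_uw : bool) (x_uv x_vw x_uw : R) : R :=
  let p_uv := pe fp fm s_uv x_uv in
  let p_vw := pe fp fm s_vw x_vw in
  let p_uw := pe fp fm s_uw x_uw in
  elp s_uv p_uw p_vw x_uv + elp s_uw p_vw p_uv x_uw + elp s_vw p_uv p_uw x_vw.

Definition valid_lengths (a b c : R) : Prop :=
  0 <= a <= 1 /\ 0 <= b <= 1 /\ 0 <= c <= 1 /\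
  a <= b + c /\ b <= a + c /\ c <= a + b.

(* Main.v *)
Require Import Defs.
From Stdlib Require Import Reals Lra Psatz.
Open Scope R_scope.

Lemma repl (A L al : R) : A <= al * L -> 0 <= L -> al <= 2025/1000 -> A <= 2025/1000 * L.
Proof. intros. nra. Qed.

Theorem theorem7 (fp fm : R -> R) (alpha : R) :
  (forall x, 0 <= x <= 1 -> 0 <= fp x <= 1) ->
  (forall x, 0 <= x <= 1 -> 0 <= fm x <= 1) ->
  fp 0 = 0 -> fm 0 = 0 ->
  0 < alpha ->
  (forall (s_uv s_vw s_uw : bool) (x_uv x_vw x_uw : R),
      valid_lengths x_uv x_vw x_uw ->
      ALG fp fm s_uv s_vw s_uw x_uv x_vw x_uw
        <= alpha * LP fp fm s_uv s_vw s_uw x_uv x_vw x_uw) ->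
  alpha > 2025 / 1000.
Proof.
  intros Hp Hm Hp0 Hm0 Ha H.
  destruct (Rlt_or_le (2025/1000) alpha) as [Hlt|Hle]; [exact Hlt|exfalso].
  assert (V1 : valid_lengths 0 1 1) by (unfold valid_lengths; lra).
  assert (V2 : valid_lengths (1/2) (1/2) 1) by (unfold valid_lengths; lra).
  assert (V3 : valid_lengths 0 (4/5) (4/5)) by (unfold valid_lengths; lra).
  assert (V4 : valid_lengths (4/5) (2/5) (2/5)) by (unfold valid_lengths; lra).
  assert (V5 : valid_lengths 0 (2/5) (2/5)) by (unfold valid_lengths; lra).
  assert (V6 : valid_lengths 0 (1/10) (1/10)) by (unfold valid_lengths; lra).
  assert (V7 : valid_lengths (1/10) (2/5) (1/2)) by (unfold valid_lengths; lra).
  pose proof (H true false false _ _ _ V1) as H1.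
  pose proof (H true true false _ _ _ V2) as H2.
  pose proof (H true false false _ _ _ V3) as H3.
  pose proof (H false true true _ _ _ V4) as H4.
  pose proof (H true true true _ _ _ V5) as H5.
  pose proof (H true true true _ _ _ V6) as H6.
  pose proof (H true true true _ _ _ V7) as H7.
  unfold ALG, LP, pe, ecost, elp in H1, H2, H3, H4, H5, H6, H7.
  rewrite Hp0 in H1, H3, H5, H6.
  destruct (Hm 1 ltac:(lra)) as [d0 d1].
  destruct (Hp (1/2) ltac:(lra)) as [P0 P1].
  destruct (Hm (4/5) ltac:(lra)) as [b0 b1].
  destruct (Hp (2/5) ltac:(lra)) as [a0 a1].
  destruct (Hp (1/10) ltac:(lra)) as [c0 c1].
  set (d := fm 1) in *. set (P := fp (1/2)) in *. set (b := fm (4/5)) in *.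
  set (a := fp (2/5)) in *. set (c := fp (1/10)) in *.
  apply repl in H1; [|nra|lra]. apply repl in H2; [|nra|lra].
  apply repl in H3; [|nra|lra]. apply repl in H4; [|nra|lra].
  apply repl in H5; [|nra|lra]. apply repl in H6; [|nra|lra].
  apply repl in H7; [|nra|lra].
  clear H Hp Hm Hp0 Hm0.
  assert (Hd : d = 1) by nra.
  subst d.
  assert (HP : P >= 975/1000) by nra.
  assert (Hb : b >= 77/100) by nra.
  assert (Ha1 : a <= 5642/10000) by nra.
  assert (Hc : c <= 107/1000) by nra.
  assert (Ha0 : a >= 4/10) by nra.
  nra.
Qed.
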